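(* Let $\{c_n\}_{n\in\mathbb Z}$ be complex numbers such that $c_n+c_{-n}\in M(\theta_0)$ for all $n\ge1$ for some $\theta_0\in[0,\pi/2)$, and such that $\{c_n\}_{n\ge0}\in NBVS$. For $n\ge0$ put $S_n(x)=\sum_{k=-n}^{n}c_ke^{ikx}$. Then the following are equivalent: (i) $S_n(x)$ converges for every $x\in\mathbb R$ to a function $f$ which is continuous and $2\pi$-periodic, and $\lim_{n\to\infty}\|f-S_n\|=0$, where $\|g\|=\max_{x\in\mathbb R}|g(x)|$; (ii) $\lim_{n\to\infty}nc_n=0$ and $\sum_{n=1}^\infty|c_n+c_{-n}|<\infty$.
   Context: For $\theta_0\in[0,\pi/2)$ let $M(\theta_0)=\{z\in\mathbb C: |\arg z|\le\theta_0\}$ (with $0\in M(\theta_0)$). Write $\Delta c_n=c_n-c_{n+1}$. A complex sequence $\mathbf C=\{c_n\}$ belongs to $NBVS$ if there is $\theta_0\in[0,\pi/2)$ with $c_n\in M(\theta_0)$ for all $n\ge1$ and a constant $K(\mathbf C)>0$ (depending only on $\mathbf C$) such that $\sum_{n=m}^{2m}|\Delta c_n|\le K(\mathbf C)\big(|c_m|+|c_{2m}|\big)$ for all $m=1,2,\dots$. *)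

(* Defs.v *)
From Stdlib Require Import Reals ZArith.
From Coquelicot Require Import Coquelicot.
Open Scope R_scope.

Definition cexp_i (t : R) : C := (cos t, sin t).

(* M(theta0) = { z : |arg z| <= theta0 } together with 0, written out:
   z = r e^{i phi} with r >= 0 and |phi| <= theta0. *)
Definition inM (theta0 : R) (z : C) : Prop :=
  exists r phi : R, 0 <= r /\ Rabs phi <= theta0 /\ z = Cmult (RtoC r) (cexp_i phi).

Definition Delta (c : nat -> C) (n : nat) : C := Cminus (c n) (c (S n)).

Definition NBVS (c : nat -> C) : Prop :=
  (exists theta0 : R, 0 <= theta0 < PI / 2 /\ forall n : nat, (1 <= n)%nat -> inM theta0 (c n))
  /\ exists K : R, 0 < K /\
     forall m : nat, (1 <= m)%nat ->
       sum_n_m (fun n => Cmod (Delta c n)) m (2 * m) <= K * (Cmod (c m) + Cmod (c (2 * m)%nat)).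

Definition Spart (c : Z -> C) (n : nat) (x : R) : C :=
  sum_n_m (fun j : nat =>
      let k := (Z.of_nat j - Z.of_nat n)%Z in
      Cmult (c k) (cexp_i (IZR k * x)))
    0 (2 * n).

(* Main.v *)
Require Import Defs.
From Stdlib Require Import Reals ZArith Lia Lra.
From Coquelicot Require Import Coquelicot.
Open Scope R_scope.
Import Defs.


Lemma sumR_Sm (a : nat -> R) m n : (m <= S n)%nat ->
  sum_n_m a m (S n) = sum_n_m a m n + a (S n).
Proof. intros H. rewrite sum_n_Sm by exact H. reflexivity. Qed.

Lemma sumR_ind_le (a b : nat -> R) m : forall d,
  (forall k, (m <= k <= m + d)%nat -> a k <= b k) ->
  sum_n_m a m (m + d) <= sum_n_m b m (m + d).
Proof.
  induction d; intros H.
  - rewrite Nat.add_0_r, !sum_n_n. apply H; lia.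
  - replace (m + S d)%nat with (S (m + d)) by lia.
    rewrite !sumR_Sm by lia.
    apply Rplus_le_compat. apply IHd; intros; apply H; lia. apply H; lia.
Qed.

Lemma sum_le_loc (a b : nat -> R) m n :
  (forall k, (m <= k <= n)%nat -> a k <= b k) ->
  sum_n_m a m n <= sum_n_m b m n.
Proof.
  intros H. destruct (le_lt_dec m n) as [Hl|Hl].
  - replace n with (m + (n - m))%nat by lia. apply sumR_ind_le.
    intros; apply H; lia.
  - rewrite !sum_n_m_zero by exact Hl. lra.
Qed.

Lemma sum_nonneg (a : nat -> R) m n :
  (forall k, (m <= k <= n)%nat -> 0 <= a k) -> 0 <= sum_n_m a m n.
Proof.
  intros H. assert (E : sum_n_m (fun _ => 0) m n = 0) by (rewrite sum_n_m_const; apply Rmult_0_r).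
  rewrite <- E. apply (sum_le_loc (fun _ => 0) a). exact H.
Qed.

Lemma sum_abs (a : nat -> R) m n :
  Rabs (sum_n_m a m n) <= sum_n_m (fun k => Rabs (a k)) m n.
Proof. apply (norm_sum_n_m (K:=R_AbsRing) (V:=R_NormedModule)). Qed.

Lemma sum_range_mono (a : nat -> R) m p q :
  (forall k, 0 <= a k) -> (m <= S p)%nat -> (p <= q)%nat ->
  sum_n_m a m p <= sum_n_m a m q.
Proof.
  intros H H1 H2. rewrite (sum_n_m_Chasles a m p q) by assumption.
  change (plus ?x ?y) with (x + y).
  assert (0 <= sum_n_m a (S p) q) by (apply sum_nonneg; intros; apply H). lra.
Qed.

Lemma sum_split (a : nat -> R) m p q :
  (m <= S p)%nat -> (p <= q)%nat ->
  sum_n_m a m q = sum_n_m a m p + sum_n_m a (S p) q.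
Proof. intros. rewrite (sum_n_m_Chasles a m p q) by assumption. reflexivity. Qed.

Lemma sum_const (c : R) m n : (m <= S n)%nat -> sum_n_m (fun _ => c) m n = INR (S n - m) * c.
Proof. intros. apply sum_n_m_const. Qed.

Lemma Rabs_sin_le t : Rabs (sin t) <= Rabs t.
Proof.
  assert (H : forall u, 0 < u -> Rabs (sin u) <= u).
  { intros u Hu. apply Rabs_le. split.
    - destruct (Rlt_le_dec u PI).
      + assert (0 < sin u) by (apply sin_gt_0; lra). lra.
      + pose proof (SIN_bound u). pose proof PI2_1. lra.
    - left. apply sin_lt_x; exact Hu. }
  destruct (Rtotal_order t 0) as [h|[h|h]].
  - rewrite <- (Ropp_involutive t), sin_neg, Rabs_Ropp, Rabs_Ropp.
    rewrite (Rabs_right (-t)) by lra. apply H; lra.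
  - subst. rewrite sin_0. lra.
  - rewrite (Rabs_right t) by lra. apply H; lra.
Qed.

Lemma cos_lip a b : Rabs (cos a - cos b) <= Rabs (a - b).
Proof.
  rewrite form2. rewrite !Rabs_mult.
  pose proof (Rabs_sin_le ((a - b) / 2)).
  pose proof (SIN_bound ((a + b) / 2)).
  assert (Rabs (sin ((a + b) / 2)) <= 1) by (apply Rabs_le; lra).
  assert (Rabs ((a - b) / 2) = Rabs (a - b) / 2).
  { unfold Rdiv. rewrite Rabs_mult, (Rabs_right (/2)) by lra. reflexivity. }
  rewrite (Rabs_left (-2)) by lra.
  assert (0 <= Rabs (sin ((a - b) / 2))) by apply Rabs_pos.
  assert (0 <= Rabs (sin ((a + b) / 2))) by apply Rabs_pos.
  nra.
Qed.

Lemma sin_lip a b : Rabs (sin a - sin b) <= Rabs (a - b).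
Proof.
  replace (sin a - sin b) with (sin a + sin (- b)) by (rewrite sin_neg; ring).
  rewrite form3. rewrite !Rabs_mult.
  replace ((a + - b) / 2) with ((a - b)/2) by field.
  pose proof (Rabs_sin_le ((a - b) / 2)).
  pose proof (COS_bound ((a - - b) / 2)).
  assert (Rabs (cos ((a - - b) / 2)) <= 1) by (apply Rabs_le; lra).
  assert (Rabs ((a - b) / 2) = Rabs (a - b) / 2).
  { unfold Rdiv. rewrite Rabs_mult, (Rabs_right (/2)) by lra. reflexivity. }
  rewrite (Rabs_right 2) by lra.
  assert (0 <= Rabs (sin ((a - b) / 2))) by apply Rabs_pos.
  assert (0 <= Rabs (cos ((a - - b) / 2))) by apply Rabs_pos.
  nra.
Qed.

Lemma sin_mult_bound (x : R) : forall k : nat,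
  Rabs (sin (INR k * x)) <= INR k * Rabs (sin x).
Proof.
  induction k.
  - simpl. rewrite Rmult_0_l, sin_0, Rabs_R0. lra.
  - rewrite S_INR. replace ((INR k + 1) * x) with (INR k * x + x) by ring.
    rewrite sin_plus.
    eapply Rle_trans. apply Rabs_triang. rewrite !Rabs_mult.
    pose proof (COS_bound x). pose proof (COS_bound (INR k * x)).
    assert (Rabs (cos x) <= 1) by (apply Rabs_le; lra).
    assert (Rabs (cos (INR k * x)) <= 1) by (apply Rabs_le; lra).
    pose proof (Rabs_pos (sin x)). pose proof (Rabs_pos (sin (INR k * x))).
    pose proof (Rabs_pos (cos x)). pose proof (Rabs_pos (cos (INR k * x))).
    nra.
Qed.

Lemma sin_half_bound x : Rabs (sin x) <= 2 * Rabs (sin (x / 2)).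
Proof.
  replace x with (2 * (x / 2)) at 1 by field. rewrite sin_2a.
  rewrite !Rabs_mult. pose proof (COS_bound (x/2)).
  assert (Rabs (cos (x/2)) <= 1) by (apply Rabs_le; lra).
  rewrite (Rabs_right 2) by lra.
  pose proof (Rabs_pos (sin (x/2))). nra.
Qed.

Lemma sin_k_bound x (k : nat) : Rabs (sin (INR k * x)) <= 2 * INR k * Rabs (sin (x / 2)).
Proof.
  pose proof (sin_mult_bound x k). pose proof (sin_half_bound x).
  pose proof (pos_INR k). nra.
Qed.

Lemma dirichlet_tel x L : forall d,
  2 * sin (x / 2) * sum_n_m (fun j => sin (INR j * x)) L (L + d)
  = cos ((INR L - /2) * x) - cos ((INR (L + d) + /2) * x).
Proof.
  assert (T : forall j, 2 * sin (x/2) * sin (INR j * x) =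
     cos ((INR j - /2) * x) - cos ((INR j + /2) * x)).
  { intros j. replace ((INR j - /2) * x) with (INR j * x - x/2) by field.
    replace ((INR j + /2) * x) with (INR j * x + x/2) by field.
    rewrite cos_minus, cos_plus. ring. }
  induction d.
  - rewrite Nat.add_0_r, sum_n_n. apply T.
  - replace (L + S d)%nat with (S (L + d)) by lia.
    rewrite sum_n_Sm by lia. change (plus ?a ?b) with (a + b).
    rewrite Rmult_plus_distr_l, IHd, T.
    rewrite S_INR. replace ((INR (L + d) + 1 - / 2) * x) with ((INR (L + d) + / 2) * x) by field.
    ring.
Qed.

Lemma dirichlet x L k : (L <= k)%nat ->
  Rabs (sin (x / 2)) * Rabs (sum_n_m (fun j => sin (INR j * x)) L k) <= 1.
Proof.
  intros H. replace k with (L + (k - L))%nat by lia.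
  pose proof (dirichlet_tel x L (k - L)).
  assert (Rabs (2 * sin (x / 2) * sum_n_m (fun j => sin (INR j * x)) L (L + (k - L))) <= 2).
  { rewrite H0. eapply Rle_trans. apply Rabs_triang. rewrite Rabs_Ropp.
    pose proof (COS_bound ((INR L - / 2) * x)). pose proof (COS_bound ((INR (L + (k - L)) + / 2) * x)).
    assert (Rabs (cos ((INR L - / 2) * x)) <= 1) by (apply Rabs_le; lra).
    assert (Rabs (cos ((INR (L + (k - L)) + / 2) * x)) <= 1) by (apply Rabs_le; lra). lra. }
  rewrite !Rabs_mult, (Rabs_right 2) in H1 by lra. lra.
Qed.

Lemma abel (a s : nat -> R) L : (1 <= L)%nat -> forall d,
  @eq R (sum_n_m (fun k => a k * s k) L (L + d))
  (a (L + d)%nat * sum_n_m s L (L + d) +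
  sum_n_m (fun k => (a k - a (S k)) * sum_n_m s L k) L (L + d - 1)).
Proof.
  intros HL. induction d.
  - rewrite Nat.add_0_r, !sum_n_n. rewrite sum_n_m_zero by lia.
    change (@zero R_AbelianMonoid) with 0. ring.
  - replace (L + S d)%nat with (S (L + d)) by lia.
    replace (S (L + d) - 1)%nat with (L + d)%nat by lia.
    rewrite !sumR_Sm by lia. rewrite IHd.
    destruct d.
    + rewrite Nat.add_0_r in *. rewrite !sum_n_n.
      rewrite (sum_n_m_zero _ L (L-1)) by lia.
      change (@zero R_AbelianMonoid) with 0. ring.
    + replace (L + S d - 1)%nat with (L + d)%nat by lia.
      replace (L + S d)%nat with (S (L + d)) by lia.
      rewrite (sumR_Sm (fun k => (a k - a (S k)) * sum_n_m s L k) L (L + d)) by lia. ring.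
Qed.

Lemma pow2_gt n : (n < 2 ^ n)%nat.
Proof. induction n; simpl; lia. Qed.

Section Core.
Variables (a w : nat -> R) (K eps : R) (m : nat).
Hypothesis Hm : (1 <= m)%nat.
Hypothesis HK : 0 <= K.
Hypothesis He : 0 <= eps.
Hypothesis Hw : forall k, 0 <= w k.
Hypothesis Haw : forall k, (m <= k)%nat -> Rabs (a k) <= w k.
Hypothesis Hkw : forall k, (m <= k)%nat -> INR k * w k <= eps.
Hypothesis Hblk : forall j, (1 <= j)%nat ->
  sum_n_m (fun k => Rabs (a k - a (S k))) j (2 * j) <= K * (w j + w (2 * j)).

Let D := fun k => Rabs (a k - a (S k)).

Lemma w_le k : (m <= k)%nat -> w k <= eps / INR k.
Proof.
  intros H. assert (0 < INR k) by (apply lt_0_INR; lia).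
  specialize (Hkw k H). apply Rmult_le_reg_l with (INR k); auto.
  field_simplify; lra.
Qed.

Lemma var_dyadic : forall J L, (m <= L)%nat ->
  sum_n_m D L (2 ^ J * L - 1) <= 3 * K * eps / INR L.
Proof.
  assert (HD : forall k, 0 <= D k) by (intros; apply Rabs_pos).
  induction J; intros L HL.
  - assert (0 < INR L) by (apply lt_0_INR; lia).
    simpl. rewrite sum_n_m_zero by lia. change (@zero R_AbelianMonoid) with 0.
    apply Rmult_le_reg_l with (INR L); auto. field_simplify; nra.
  - assert (0 < INR L) by (apply lt_0_INR; lia).
    replace (2 ^ S J * L - 1)%nat with (2 ^ J * (2 * L) - 1)%nat by (simpl; lia).
    assert (1 <= 2 ^ J)%nat by (pose proof (pow2_gt J); lia).
    rewrite (sum_split D L (2 * L - 1) (2 ^ J * (2 * L) - 1)) by nia.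
    replace (S (2 * L - 1)) with (2 * L)%nat by lia.
    assert (H1 : sum_n_m D L (2 * L - 1) <= K * (w L + w (2 * L))).
    { eapply Rle_trans. apply sum_range_mono with (q := (2 * L)%nat); auto; lia.
      apply Hblk; lia. }
    pose proof (IHJ (2 * L)%nat ltac:(lia)).
    pose proof (w_le L HL). pose proof (w_le (2 * L) ltac:(lia)).
    rewrite mult_INR in *. change (INR 2) with 2 in *.
    assert (K * (w L + w (2 * L)%nat) <= K * (eps / INR L + eps / (2 * INR L))).
    { apply Rmult_le_compat_l; auto. lra. }
    assert (E : K * (eps / INR L + eps / (2 * INR L)) + 3 * K * eps / (2 * INR L)
              = 3 * K * eps / INR L) by (field; lra).
    lra.
Qed.

Lemma var_tail L q : (m <= L)%nat -> sum_n_m D L q <= 3 * K * eps / INR L.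
Proof.
  intros HL. assert (HD : forall k, 0 <= D k) by (intros; apply Rabs_pos).
  destruct (le_lt_dec L q).
  - eapply Rle_trans. apply sum_range_mono with (q := (2 ^ q * L - 1)%nat); auto.
    all: try (pose proof (pow2_gt q); nia). apply var_dyadic; auto.
  - rewrite sum_n_m_zero by lia. change (@zero R_AbelianMonoid) with 0.
    assert (0 < INR L) by (apply lt_0_INR; lia).
    apply Rmult_le_reg_l with (INR L); auto. field_simplify; nra.
Qed.

Lemma core x n : Rabs (sum_n_m (fun k => a k * sin (INR k * x)) m n) <= (3 + 3 * K) * eps.
Proof.
  set (s := Rabs (sin (x / 2))).
  assert (Hs : 0 <= s) by apply Rabs_pos.
  assert (Hterm : forall k, (m <= k)%nat -> Rabs (a k * sin (INR k * x)) <= 2 * eps * s).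
  { intros k Hk. rewrite Rabs_mult. pose proof (sin_k_bound x k). fold s in H.
    pose proof (Haw k Hk). pose proof (Hkw k Hk). pose proof (Rabs_pos (a k)).
    pose proof (Rabs_pos (sin (INR k * x))). pose proof (pos_INR k). pose proof (Hw k).
    apply Rle_trans with (w k * (2 * INR k * s)). apply Rmult_le_compat; auto.
    nra. }
  destruct (Req_dec s 0) as [s0|spos].
  - eapply Rle_trans. apply sum_abs.
    eapply Rle_trans. apply sum_le_loc with (b := fun _ => 0).
    intros k Hk. pose proof (Hterm k ltac:(lia)) as Hk2. rewrite s0 in Hk2.
    replace (2 * eps * 0) with 0 in Hk2 by ring. exact Hk2.
    rewrite sum_n_m_const. nra.
  - assert (spos' : 0 < s) by lra.
    destruct (archimed (/ s)) as [Hu1 Hu2].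
    assert (0 < / s) by (apply Rinv_0_lt_compat; lra).
    assert (upos : (0 < up (/ s))%Z) by (apply lt_IZR; simpl; lra).
    set (L0 := Z.to_nat (up (/ s))).
    assert (HL0 : INR L0 = IZR (up (/ s))) by (unfold L0; rewrite INR_IZR_INZ; f_equal; apply Z2Nat.id; lia).
    set (L := Nat.max m L0).
    assert (P1 : forall p, (p < L)%nat ->
      Rabs (sum_n_m (fun k => a k * sin (INR k * x)) m p) <= 2 * eps).
    { intros p Hp. destruct (le_lt_dec m p) as [mp|pm].
      2:{ rewrite sum_n_m_zero by lia. change (@zero R_AbelianMonoid) with 0.
          rewrite Rabs_R0; lra. }
      assert (pL0 : (p < L0)%nat) by (unfold L in Hp; lia).
      eapply Rle_trans. apply sum_abs.
      eapply Rle_trans. apply sum_le_loc with (b := fun _ => 2 * eps * s).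
      intros k Hk. apply Hterm; lia.
      rewrite sum_n_m_const.
      assert (INR (S p - m) <= INR p) by (apply le_INR; lia).
      assert (INR p <= INR L0 - 1).
      { replace (INR L0 - 1) with (INR (L0 - 1)). apply le_INR; lia.
        rewrite minus_INR by lia. simpl; ring. }
      assert (INR (S p - m) * s <= 1).
      { assert (Hq : INR (S p - m) <= / s) by lra.
        apply Rmult_le_compat_r with (r := s) in Hq; auto.
        rewrite Rinv_l in Hq; lra. }
      pose proof (pos_INR (S p - m)). nra. }
    destruct (le_lt_dec L n) as [Ln|nL].
    2:{ eapply Rle_trans. apply P1; auto. nra. }
    assert (HL1 : (1 <= L)%nat) by (unfold L; lia).
    assert (HmL : (m <= L)%nat) by (unfold L; lia).
    rewrite (sum_split _ m (L - 1) n) by lia.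
    replace (S (L - 1)) with L by lia.
    eapply Rle_trans. apply Rabs_triang.
    assert (P2 : Rabs (sum_n_m (fun k => a k * sin (INR k * x)) L n) <= (1 + 3 * K) * eps).
    { replace n with (L + (n - L))%nat by lia.
      rewrite (abel a (fun k => sin (INR k * x)) L HL1 (n - L)).
      replace (L + (n - L))%nat with n by lia.
      assert (Hsig : forall k, (L <= k)%nat ->
        Rabs (sum_n_m (fun j => sin (INR j * x)) L k) <= / s).
      { intros k Hk. pose proof (dirichlet x L k Hk). fold s in H0.
        apply Rmult_le_reg_l with s; auto. rewrite Rinv_r; lra. }
      assert (HLs : / s <= INR L).
      { assert (INR L0 <= INR L) by (apply le_INR; unfold L; lia). lra. }
      assert (0 < INR L) by (apply lt_0_INR; lia).
      eapply Rle_trans. apply Rabs_triang.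
      assert (T1 : Rabs (a n * sum_n_m (fun k => sin (INR k * x)) L n) <= eps).
      { rewrite Rabs_mult. pose proof (Haw n ltac:(lia)). pose proof (Hsig n Ln).
        pose proof (w_le n ltac:(lia)).
        assert (eps / INR n <= eps / INR L).
        { unfold Rdiv. apply Rmult_le_compat_l; auto. apply Rinv_le_contravar; auto.
          apply le_INR; lia. }
        apply Rle_trans with ((eps / INR L) * INR L).
        apply Rmult_le_compat; try apply Rabs_pos; lra.
        right; field; lra. }
      assert (T2 : Rabs (sum_n_m (fun k => (a k - a (S k)) * sum_n_m (fun j => sin (INR j * x)) L k) L (n - 1)) <= 3 * K * eps).
      { eapply Rle_trans. apply sum_abs.
        eapply Rle_trans. apply sum_le_loc with (b := fun k => D k * / s).
        { intros k Hk. rewrite Rabs_mult. apply Rmult_le_compat_l. apply Rabs_pos.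
          apply Hsig; lia. }
        rewrite (sum_n_m_mult_r (K := R_Ring)). change (@mult R_Ring ?u ?v) with (u * v).
        pose proof (var_tail L (n - 1) HmL).
        assert (0 <= sum_n_m D L (n - 1)) by (apply sum_nonneg; intros; apply Rabs_pos).
        apply Rle_trans with (3 * K * eps / INR L * INR L).
        apply Rmult_le_compat; auto; lra.
        right; field; lra. }
      lra. }
    assert (HLL : (L - 1 < L)%nat) by lia.
    pose proof (P1 (L - 1)%nat HLL). lra.
Qed.
End Core.

Lemma re_le (z : C) : Rabs (fst z) <= Cmod z.
Proof. pose proof (Rmax_Cmod z). pose proof (Rmax_l (Rabs (fst z)) (Rabs (snd z))). lra. Qed.
Lemma im_le (z : C) : Rabs (snd z) <= Cmod z.
Proof. pose proof (Rmax_Cmod z). pose proof (Rmax_r (Rabs (fst z)) (Rabs (snd z))). lra. Qed.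

Lemma Cmod_le_sum (z : C) : Cmod z <= Rabs (fst z) + Rabs (snd z).
Proof.
  unfold Cmod. destruct z as [p q]; simpl.
  rewrite <- (sqrt_Rsqr (Rabs p + Rabs q)) by (pose proof (Rabs_pos p); pose proof (Rabs_pos q); lra).
  apply sqrt_le_1_alt. unfold Rsqr.
  pose proof (Rabs_pos p); pose proof (Rabs_pos q).
  assert (p * p = Rabs p * Rabs p) by (rewrite <- Rabs_mult; rewrite Rabs_right; nra).
  assert (q * q = Rabs q * Rabs q) by (rewrite <- Rabs_mult; rewrite Rabs_right; nra).
  nra.
Qed.

Lemma cone (th : R) (z : C) : 0 <= th < PI / 2 -> inM th z -> cos th * Cmod z <= fst z.
Proof.
  intros Hth [r [phi [Hr [Hphi E]]]]. subst z.
  rewrite Cmod_mult, Cmod_R, Rabs_right by lra.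
  assert (Cmod (cexp_i phi) = 1).
  { unfold Cmod, cexp_i. cbn [fst snd].
    replace (cos phi ^ 2 + sin phi ^ 2) with 1. apply sqrt_1.
    rewrite <- (sin2_cos2 phi). unfold Rsqr. ring. }
  rewrite H. unfold cexp_i, RtoC; simpl.
  assert (cos th <= cos phi).
  { assert (cos phi = cos (Rabs phi)).
    { destruct (Rle_dec 0 phi). rewrite Rabs_right by lra; reflexivity.
      rewrite Rabs_left by lra. rewrite cos_neg. reflexivity. }
    rewrite H0. apply cos_decr_1; pose proof (Rabs_pos phi); pose proof PI_RGT_0; lra. }
  nra.
Qed.

Lemma eqRs (a b : R) : @eq R a b -> @eq (AbelianMonoid.sort R_AbelianMonoid) a b.
Proof. exact (fun h => h). Qed.

Section S.
Variable c : Z -> C.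
Definition cp (k : nat) := c (Z.of_nat k).
Definition cm (k : nat) := c (- Z.of_nat k)%Z.
Definition bb (k : nat) := Cplus (cp k) (cm k).
Definition uu (k : nat) (x : R) : C :=
  Cplus (Cmult (cp k) (cexp_i (INR k * x))) (Cmult (cm k) (cexp_i (- INR k * x))).

Lemma Spart_S n x : Spart c (S n) x = Cplus (Spart c n x) (uu (S n) x).
Proof.
  unfold Spart.
  set (g := fun n j => let k := (Z.of_nat j - Z.of_nat n)%Z in Cmult (c k) (cexp_i (IZR k * x))).
  change (sum_n_m (g (S n)) 0 (2 * S n) = Cplus (sum_n_m (g n) 0 (2 * n)) (uu (S n) x)).
  replace (2 * S n)%nat with (S (S (2 * n))) by lia.
  rewrite sum_Sn_m by lia. rewrite sum_n_Sm by lia.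
  rewrite <- sum_n_m_S.
  rewrite (sum_n_m_ext (fun j => g (S n) (S j)) (g n)).
  2:{ intros j. unfold g. cbv zeta. replace (Z.of_nat (S j) - Z.of_nat (S n))%Z with (Z.of_nat j - Z.of_nat n)%Z by lia. reflexivity. }
  unfold g, uu, cp, cm.
  replace (Z.of_nat 0 - Z.of_nat (S n))%Z with (- Z.of_nat (S n))%Z by lia.
  replace (Z.of_nat (S (S (2 * n))) - Z.of_nat (S n))%Z with (Z.of_nat (S n)) by lia.
  rewrite opp_IZR, <- INR_IZR_INZ.
  set (A := sum_n_m (fun j => Cmult (c (Z.of_nat j - Z.of_nat n)%Z) (cexp_i (IZR (Z.of_nat j - Z.of_nat n) * x))) 0 (2 * n)).
  change (plus (Cmult (c (- Z.of_nat (S n))%Z) (cexp_i (- INR (S n) * x)))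
      (plus A (Cmult (c (Z.of_nat (S n))) (cexp_i (INR (S n) * x)))) =
      Cplus A (Cplus (Cmult (c (Z.of_nat (S n))) (cexp_i (INR (S n) * x)))
        (Cmult (c (- Z.of_nat (S n))%Z) (cexp_i (- INR (S n) * x))))).
  change (@plus C_AbelianMonoid) with Cplus.
  destruct A as [a1 a2].
  destruct (Cmult (c (- Z.of_nat (S n))%Z) (cexp_i (- INR (S n) * x))) as [p1 p2].
  destruct (Cmult (c (Z.of_nat (S n))) (cexp_i (INR (S n) * x))) as [q1 q2].
  unfold Cplus; simpl. f_equal; ring.
Qed.

Lemma Spart_0 x : Spart c 0 x = c 0%Z.
Proof.
  unfold Spart. simpl. rewrite sum_n_n. simpl. rewrite Rmult_0_l.
  unfold cexp_i. rewrite cos_0, sin_0. destruct (c 0%Z) as [p q].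
  unfold Cmult; simpl. f_equal; ring.
Qed.

Lemma uu_fst k x : fst (uu k x) =
  fst (bb k) * cos (INR k * x) + snd (bb k) * sin (INR k * x) - 2 * (snd (cp k) * sin (INR k * x)).
Proof.
  unfold uu, bb, cexp_i. replace (- INR k * x) with (- (INR k * x)) by ring.
  rewrite cos_neg, sin_neg. destruct (cp k) as [p q]. destruct (cm k) as [p' q'].
  unfold Cplus, Cmult; simpl. ring.
Qed.

Lemma uu_snd k x : snd (uu k x) =
  snd (bb k) * cos (INR k * x) - fst (bb k) * sin (INR k * x) + 2 * (fst (cp k) * sin (INR k * x)).
Proof.
  unfold uu, bb, cexp_i. replace (- INR k * x) with (- (INR k * x)) by ring.
  rewrite cos_neg, sin_neg. destruct (cp k) as [p q]. destruct (cm k) as [p' q'].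
  unfold Cplus, Cmult; simpl. ring.
Qed.

Definition SR n x := sum_n_m (fun k => fst (uu k x)) 1 n.
Definition SI n x := sum_n_m (fun k => snd (uu k x)) 1 n.

Lemma Spart_comp n x : Spart c n x = Cplus (c 0%Z) (SR n x, SI n x).
Proof.
  induction n.
  - rewrite Spart_0. unfold SR, SI. rewrite !sum_n_m_zero by lia.
    destruct (c 0%Z) as [p q]. unfold Cplus; simpl. f_equal; change (@zero R_AbelianMonoid) with 0; ring.
  - rewrite Spart_S, IHn. unfold SR, SI. rewrite !sum_n_Sm by lia.
    destruct (c 0%Z) as [p q]. unfold Cplus; simpl. f_equal; change (@plus R_AbelianMonoid) with Rplus; ring.
Qed.

Lemma sumR_plus (f g : nat -> R) m n :
  @eq R (sum_n_m (fun k => f k + g k) m n) (sum_n_m f m n + sum_n_m g m n).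
Proof. apply (sum_n_m_plus (G := R_AbelianMonoid)). Qed.

Lemma sumR_mult (a : R) (f : nat -> R) m n :
  @eq R (sum_n_m (fun k => a * f k) m n) (a * sum_n_m f m n).
Proof. apply (sum_n_m_mult_l (K := R_Ring)). Qed.

Lemma bterm k x : Rabs (fst (bb k) * cos (INR k * x) + snd (bb k) * sin (INR k * x)) <= 2 * Cmod (bb k).
Proof.
  pose proof (re_le (bb k)). pose proof (im_le (bb k)).
  eapply Rle_trans. apply Rabs_triang. rewrite !Rabs_mult.
  pose proof (COS_bound (INR k * x)). pose proof (SIN_bound (INR k * x)).
  assert (Rabs (cos (INR k * x)) <= 1) by (apply Rabs_le; lra).
  assert (Rabs (sin (INR k * x)) <= 1) by (apply Rabs_le; lra).
  pose proof (Rabs_pos (fst (bb k))). pose proof (Rabs_pos (snd (bb k))).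
  pose proof (Rabs_pos (cos (INR k * x))). pose proof (Rabs_pos (sin (INR k * x))).
  nra.
Qed.

Lemma bterm2 k x : Rabs (snd (bb k) * cos (INR k * x) - fst (bb k) * sin (INR k * x)) <= 2 * Cmod (bb k).
Proof.
  pose proof (re_le (bb k)). pose proof (im_le (bb k)).
  unfold Rminus. eapply Rle_trans. apply Rabs_triang. rewrite Rabs_Ropp, !Rabs_mult.
  pose proof (COS_bound (INR k * x)). pose proof (SIN_bound (INR k * x)).
  assert (Rabs (cos (INR k * x)) <= 1) by (apply Rabs_le; lra).
  assert (Rabs (sin (INR k * x)) <= 1) by (apply Rabs_le; lra).
  pose proof (Rabs_pos (fst (bb k))). pose proof (Rabs_pos (snd (bb k))).
  pose proof (Rabs_pos (cos (INR k * x))). pose proof (Rabs_pos (sin (INR k * x))).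
  nra.
Qed.

Lemma fst_bound m n x :
  Rabs (sum_n_m (fun k => fst (uu k x)) m n) <=
  2 * sum_n_m (fun k => Cmod (bb k)) m n + 2 * Rabs (sum_n_m (fun k => snd (cp k) * sin (INR k * x)) m n).
Proof.
  rewrite (sum_n_m_ext _ (fun k => (fst (bb k) * cos (INR k * x) + snd (bb k) * sin (INR k * x)) + (-2) * (snd (cp k) * sin (INR k * x)))).
  2:{ intros k. apply eqRs. rewrite uu_fst. ring. }
  rewrite sumR_plus, sumR_mult.
  eapply Rle_trans. apply Rabs_triang. rewrite Rabs_mult.
  replace (Rabs (-2)) with 2 by (rewrite Rabs_left by lra; ring).
  apply Rplus_le_compat_r.
  eapply Rle_trans. apply sum_abs.
  rewrite <- sumR_mult. apply sum_le_loc. intros; apply bterm.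
Qed.

Lemma snd_bound m n x :
  Rabs (sum_n_m (fun k => snd (uu k x)) m n) <=
  2 * sum_n_m (fun k => Cmod (bb k)) m n + 2 * Rabs (sum_n_m (fun k => fst (cp k) * sin (INR k * x)) m n).
Proof.
  rewrite (sum_n_m_ext _ (fun k => (snd (bb k) * cos (INR k * x) - fst (bb k) * sin (INR k * x)) + 2 * (fst (cp k) * sin (INR k * x)))).
  2:{ intros k. apply eqRs. rewrite uu_snd. ring. }
  rewrite sumR_plus, sumR_mult.
  eapply Rle_trans. apply Rabs_triang. rewrite Rabs_mult.
  rewrite (Rabs_right 2) by lra.
  apply Rplus_le_compat_r.
  eapply Rle_trans. apply sum_abs.
  rewrite <- sumR_mult. apply sum_le_loc. intros; apply bterm2.
Qed.

Lemma SR_diff p n x : (p <= n)%nat -> @eq R (SR n x - SR p x) (sum_n_m (fun k => fst (uu k x)) (S p) n).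
Proof. intros. unfold SR. rewrite (sum_split _ 1 p n) by lia. ring. Qed.
Lemma SI_diff p n x : (p <= n)%nat -> @eq R (SI n x - SI p x) (sum_n_m (fun k => snd (uu k x)) (S p) n).
Proof. intros. unfold SI. rewrite (sum_split _ 1 p n) by lia. ring. Qed.

End S.

Lemma ballR (x y : R) (e : posreal) : Rabs (y - x) < e -> ball x e y.
Proof. intros H. unfold ball; simpl. unfold AbsRing_ball, abs, minus, plus, opp; simpl. exact H. Qed.

Lemma ballR_inv (x y : R) (e : posreal) : ball x e y -> Rabs (y - x) < e.
Proof. unfold ball; simpl. unfold AbsRing_ball, abs, minus, plus, opp; simpl. auto. Qed.

Lemma ballC (z w : C) (e : posreal) :
  Rabs (fst w - fst z) < e -> Rabs (snd w - snd z) < e -> ball z e w.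
Proof.
  intros H1 H2. unfold ball; simpl. unfold prod_ball. split; apply ballR; auto.
Qed.

Lemma Rabs_bw (a b : R) : Rabs a <= b -> - b <= a <= b.
Proof. unfold Rabs; destruct Rcase_abs; lra. Qed.

Lemma ulim (F : nat -> R -> R) :
  (forall eps, 0 < eps -> exists N, forall p n x, (N <= p)%nat -> (p <= n)%nat -> Rabs (F n x - F p x) <= eps) ->
  forall eps, 0 < eps -> exists N, forall n x, (N <= n)%nat ->
    Rabs (real (Lim_seq (fun k => F k x)) - F n x) <= eps.
Proof.
  intros H eps He. destruct (H eps He) as [N HN]. exists N. intros n x Hn.
  assert (Hc : ex_finite_lim_seq (fun k => F k x)).
  { apply ex_lim_seq_cauchy_corr. intros e. destruct (H (e / 2)) as [N' HN'].
    destruct e; simpl; lra.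
    exists N'. intros a b Ha Hb. destruct (le_lt_dec a b).
    - pose proof (HN' a b x Ha l). destruct e; simpl in *.
      rewrite Rabs_minus_sym. lra.
    - pose proof (HN' b a x Hb ltac:(lia)). destruct e; simpl in *. lra. }
  destruct Hc as [l Hl].
  rewrite (is_lim_seq_unique _ _ Hl). simpl.
  assert (B1 : Rbar_le (F n x - eps) l).
  { apply (is_lim_seq_le_loc (fun _ => F n x - eps) (fun k => F k x)); auto.
    exists n. intros k Hk. pose proof (HN n k x Hn Hk). apply Rabs_bw in H0. lra.
    apply is_lim_seq_const. }
  assert (B2 : Rbar_le l (F n x + eps)).
  { apply (is_lim_seq_le_loc (fun k => F k x) (fun _ => F n x + eps)); auto.
    exists n. intros k Hk. pose proof (HN n k x Hn Hk). apply Rabs_bw in H0. lra.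
    apply is_lim_seq_const. }
  simpl in B1, B2. apply Rabs_le. lra.
Qed.

Lemma lip_term (A B : R) (k : nat) x y :
  Rabs ((A * cos (INR k * y) + B * sin (INR k * y)) - (A * cos (INR k * x) + B * sin (INR k * x)))
  <= (Rabs A + Rabs B) * INR k * Rabs (y - x).
Proof.
  replace ((A * cos (INR k * y) + B * sin (INR k * y)) - (A * cos (INR k * x) + B * sin (INR k * x)))
    with (A * (cos (INR k * y) - cos (INR k * x)) + B * (sin (INR k * y) - sin (INR k * x))) by ring.
  eapply Rle_trans. apply Rabs_triang. rewrite !Rabs_mult.
  pose proof (cos_lip (INR k * y) (INR k * x)). pose proof (sin_lip (INR k * y) (INR k * x)).
  replace (INR k * y - INR k * x) with (INR k * (y - x)) in * by ring.
  rewrite Rabs_mult, (Rabs_right (INR k)) in * by (apply Rle_ge, pos_INR).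
  pose proof (Rabs_pos A). pose proof (Rabs_pos B).
  apply Rle_trans with (Rabs A * (INR k * Rabs (y - x)) + Rabs B * (INR k * Rabs (y - x))).
  apply Rplus_le_compat; apply Rmult_le_compat_l; auto.
  right; ring.
Qed.

Lemma Cmod_INR_mult (n : nat) (z : C) : Cmod (Cmult (RtoC (INR n)) z) = INR n * Cmod z.
Proof. rewrite Cmod_mult, Cmod_R, Rabs_right; [reflexivity | apply Rle_ge, pos_INR]. Qed.

Section Dir2.
Variable c : Z -> C.

Lemma blk_fst K : 
  (forall m : nat, (1 <= m)%nat ->
       sum_n_m (fun n => Cmod (Delta (fun n : nat => c (Z.of_nat n)) n)) m (2 * m) <= K * (Cmod (c (Z.of_nat m)) + Cmod (c (Z.of_nat (2 * m)%nat)))) ->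
  forall j, (1 <= j)%nat ->
  sum_n_m (fun k => Rabs (fst (cp c k) - fst (cp c (S k)))) j (2 * j) <= K * (Cmod (cp c j) + Cmod (cp c (2 * j))).
Proof.
  intros H j Hj. eapply Rle_trans. 2: apply (H j Hj).
  apply sum_le_loc. intros k _. eapply Rle_trans. 2: apply re_le.
  unfold Delta, cp, Cminus, Cplus, Copp; simpl. right; f_equal; ring.
Qed.

Lemma blk_snd K : 
  (forall m : nat, (1 <= m)%nat ->
       sum_n_m (fun n => Cmod (Delta (fun n : nat => c (Z.of_nat n)) n)) m (2 * m) <= K * (Cmod (c (Z.of_nat m)) + Cmod (c (Z.of_nat (2 * m)%nat)))) ->
  forall j, (1 <= j)%nat ->
  sum_n_m (fun k => Rabs (snd (cp c k) - snd (cp c (S k)))) j (2 * j) <= K * (Cmod (cp c j) + Cmod (cp c (2 * j))).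
Proof.
  intros H j Hj. eapply Rle_trans. 2: apply (H j Hj).
  apply sum_le_loc. intros k _. eapply Rle_trans. 2: apply im_le.
  unfold Delta, cp, Cminus, Cplus, Copp; simpl. right; f_equal; ring.
Qed.

Lemma tail_b :
  ex_series (fun n => Cmod (bb c (S n))) ->
  forall d, 0 < d -> exists N, forall p n, (N <= p)%nat -> (p < n)%nat ->
    sum_n_m (fun k => Cmod (bb c k)) (S p) n <= d.
Proof.
  intros Hs d Hd. apply (Cauchy_ex_series (K := R_AbsRing) (V := R_CompleteNormedModule)) in Hs.
  destruct (Hs (mkposreal d Hd)) as [N HN]. exists N. intros p n Hp Hn.
  specialize (HN p (n - 1)%nat Hp ltac:(lia)).
  assert (HN' : Rabs (sum_n_m (fun j => Cmod (bb c (S j))) p (n-1)) < d) by exact HN.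
  rewrite (sum_n_m_S (G := R_AbelianMonoid) (fun k => Cmod (bb c k))) in HN'.
  replace (S (n - 1)) with n in HN' by lia.
  pose proof (Rle_abs (sum_n_m (fun k => Cmod (bb c k)) (S p) n)). lra.
Qed.

Lemma ucauchy K :
  0 <= K ->
  (forall m : nat, (1 <= m)%nat ->
       sum_n_m (fun n => Cmod (Delta (fun n : nat => c (Z.of_nat n)) n)) m (2 * m) <= K * (Cmod (c (Z.of_nat m)) + Cmod (c (Z.of_nat (2 * m)%nat)))) ->
  is_lim_seq (fun n : nat => Cmod (Cmult (RtoC (INR n)) (c (Z.of_nat n)))) 0 ->
  ex_series (fun n : nat => Cmod (Cplus (c (Z.of_nat (S n))) (c (- Z.of_nat (S n))%Z))) ->
  forall eps, 0 < eps -> exists N, forall p n x, (N <= p)%nat -> (p <= n)%nat ->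
    Rabs (SR c n x - SR c p x) <= eps /\ Rabs (SI c n x - SI c p x) <= eps.
Proof.
  intros HK Hblk Hlim Hser eps He.
  set (eta := eps / (4 * (3 + 3 * K))).
  assert (Heta : 0 < eta) by (unfold eta; apply Rdiv_lt_0_compat; lra).
  destruct (tail_b Hser (eps / 4) ltac:(lra)) as [N2 HN2].
  apply is_lim_seq_spec in Hlim. destruct (Hlim (mkposreal eta Heta)) as [N1 HN1].
  exists (Nat.max N1 N2). intros p n x Hp Hpn.
  destruct (Nat.eq_dec p n) as [E|Hne].
  { subst. rewrite !Rminus_diag, Rabs_R0. lra. }
  assert (Hb := HN2 p n ltac:(lia) ltac:(lia)).
  assert (Hkw : forall k, (S p <= k)%nat -> INR k * Cmod (cp c k) <= eta).
  { intros k Hk. specialize (HN1 k ltac:(lia)). simpl in HN1.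
    rewrite Rminus_0_r, Cmod_INR_mult in HN1. unfold cp.
    pose proof (Rle_abs (INR k * Cmod (c (Z.of_nat k)))). lra. }
  assert (C1 := core (fun k => snd (cp c k)) (fun k => Cmod (cp c k)) K eta (S p)
     ltac:(lia) HK ltac:(lra) (fun k => Cmod_ge_0 _) (fun k _ => im_le _) Hkw (blk_snd K Hblk) x n).
  assert (C2 := core (fun k => fst (cp c k)) (fun k => Cmod (cp c k)) K eta (S p)
     ltac:(lia) HK ltac:(lra) (fun k => Cmod_ge_0 _) (fun k _ => re_le _) Hkw (blk_fst K Hblk) x n).
  simpl in C1, C2.
  assert (E : (3 + 3 * K) * eta = eps / 4) by (unfold eta; field; lra).
  rewrite E in C1, C2.
  split.
  - rewrite SR_diff by lia. eapply Rle_trans. apply fst_bound. lra.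
  - rewrite SI_diff by lia. eapply Rle_trans. apply snd_bound. lra.
Qed.

End Dir2.

Section G.
Variable c : Z -> C.

Lemma cexp_period (t : R) (k : nat) x : (t = INR k \/ t = - INR k) ->
  cexp_i (t * (x + 2 * PI)) = cexp_i (t * x).
Proof.
  intros [-> | ->]; unfold cexp_i.
  - replace (INR k * (x + 2 * PI)) with (INR k * x + 2 * INR k * PI) by ring.
    rewrite cos_period, sin_period. reflexivity.
  - replace (- INR k * x) with (- INR k * (x + 2 * PI) + 2 * INR k * PI) by ring.
    rewrite cos_period, sin_period. reflexivity.
Qed.

Lemma uu_period k x : uu c k (x + 2 * PI) = uu c k x.
Proof.
  unfold uu. rewrite (cexp_period (INR k) k) by auto.
  rewrite (cexp_period (- INR k) k) by auto. reflexivity.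
Qed.

Lemma SR_period n x : SR c n (x + 2 * PI) = SR c n x.
Proof. unfold SR. apply sum_n_m_ext. intros; rewrite uu_period; reflexivity. Qed.
Lemma SI_period n x : SI c n (x + 2 * PI) = SI c n x.
Proof. unfold SI. apply sum_n_m_ext. intros; rewrite uu_period; reflexivity. Qed.

Lemma SR_lip : forall N, exists L, 0 <= L /\ forall x y, Rabs (SR c N y - SR c N x) <= L * Rabs (y - x).
Proof.
  induction N.
  - exists 0. split. lra. intros. unfold SR. rewrite !sum_n_m_zero by lia.
    change (@zero R_AbelianMonoid) with 0. rewrite Rminus_0_r, Rabs_R0. lra.
  - destruct IHN as [L [HL0 HL]].
    set (A := fst (bb c (S N))). set (B := snd (bb c (S N)) - 2 * snd (cp c (S N))).
    exists (L + (Rabs A + Rabs B) * INR (S N)). split.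
    { pose proof (Rabs_pos A). pose proof (Rabs_pos B). pose proof (pos_INR (S N)). nra. }
    intros x y. unfold SR. rewrite !sum_n_Sm by lia. change (@plus R_AbelianMonoid) with Rplus.
    rewrite !uu_fst. fold A.
    pose proof (lip_term A B (S N) x y). pose proof (HL x y). unfold SR in H0.
    replace (sum_n_m (fun k : nat => fst (uu c k y)) 1 N +
      (A * cos (INR (S N) * y) + snd (bb c (S N)) * sin (INR (S N) * y) -
       2 * (snd (cp c (S N)) * sin (INR (S N) * y))) -
      (sum_n_m (fun k : nat => fst (uu c k x)) 1 N +
       (A * cos (INR (S N) * x) + snd (bb c (S N)) * sin (INR (S N) * x) -
        2 * (snd (cp c (S N)) * sin (INR (S N) * x)))))
    with ((sum_n_m (fun k : nat => fst (uu c k y)) 1 N - sum_n_m (fun k : nat => fst (uu c k x)) 1 N)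
      + ((A * cos (INR (S N) * y) + B * sin (INR (S N) * y)) - (A * cos (INR (S N) * x) + B * sin (INR (S N) * x))))
    by (unfold B; ring).
    eapply Rle_trans. apply Rabs_triang. pose proof (Rabs_pos (y - x)). nra.
Qed.

Lemma SI_lip : forall N, exists L, 0 <= L /\ forall x y, Rabs (SI c N y - SI c N x) <= L * Rabs (y - x).
Proof.
  induction N.
  - exists 0. split. lra. intros. unfold SI. rewrite !sum_n_m_zero by lia.
    change (@zero R_AbelianMonoid) with 0. rewrite Rminus_0_r, Rabs_R0. lra.
  - destruct IHN as [L [HL0 HL]].
    set (A := snd (bb c (S N))). set (B := 2 * fst (cp c (S N)) - fst (bb c (S N))).
    exists (L + (Rabs A + Rabs B) * INR (S N)). split.
    { pose proof (Rabs_pos A). pose proof (Rabs_pos B). pose proof (pos_INR (S N)). nra. }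
    intros x y. unfold SI. rewrite !sum_n_Sm by lia. change (@plus R_AbelianMonoid) with Rplus.
    rewrite !uu_snd. fold A.
    pose proof (lip_term A B (S N) x y). pose proof (HL x y). unfold SI in H0.
    replace (sum_n_m (fun k : nat => snd (uu c k y)) 1 N +
      (A * cos (INR (S N) * y) - fst (bb c (S N)) * sin (INR (S N) * y) +
       2 * (fst (cp c (S N)) * sin (INR (S N) * y))) -
      (sum_n_m (fun k : nat => snd (uu c k x)) 1 N +
       (A * cos (INR (S N) * x) - fst (bb c (S N)) * sin (INR (S N) * x) +
        2 * (fst (cp c (S N)) * sin (INR (S N) * x)))))
    with ((sum_n_m (fun k : nat => snd (uu c k y)) 1 N - sum_n_m (fun k : nat => snd (uu c k x)) 1 N)
      + ((A * cos (INR (S N) * y) + B * sin (INR (S N) * y)) - (A * cos (INR (S N) * x) + B * sin (INR (S N) * x))))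
    by (unfold B; ring).
    eapply Rle_trans. apply Rabs_triang. pose proof (Rabs_pos (y - x)). nra.
Qed.

End G.

Lemma dir2 (c : Z -> C) K :
  0 <= K ->
  (forall m : nat, (1 <= m)%nat ->
       sum_n_m (fun n => Cmod (Delta (fun n : nat => c (Z.of_nat n)) n)) m (2 * m) <= K * (Cmod (c (Z.of_nat m)) + Cmod (c (Z.of_nat (2 * m)%nat)))) ->
  is_lim_seq (fun n : nat => Cmod (Cmult (RtoC (INR n)) (c (Z.of_nat n)))) 0 ->
  ex_series (fun n : nat => Cmod (Cplus (c (Z.of_nat (S n))) (c (- Z.of_nat (S n))%Z))) ->
  (exists f : R -> C,
      (forall x : R, continuous f x)
      /\ (forall x : R, f (x + 2 * PI) = f x)
      /\ (forall x : R, filterlim (fun n : nat => Spart c n x) eventually (locally (f x)))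
      /\ (forall eps : R, 0 < eps -> exists N : nat, forall n : nat, (N <= n)%nat ->
            forall x : R, Cmod (Cminus (f x) (Spart c n x)) <= eps)).
Proof.
  intros HK Hblk Hlim Hser.
  pose proof (ucauchy c K HK Hblk Hlim Hser) as UC.
  assert (LR := ulim (fun n x => SR c n x) ltac:(intros e He; destruct (UC e He) as [N HN]; exists N; intros p n x Hp Hn; apply (HN p n x Hp Hn))).
  assert (LI := ulim (fun n x => SI c n x) ltac:(intros e He; destruct (UC e He) as [N HN]; exists N; intros p n x Hp Hn; apply (HN p n x Hp Hn))).
  simpl in LR, LI.
  set (lr := fun x => real (Lim_seq (fun k => SR c k x))).
  set (li := fun x => real (Lim_seq (fun k => SI c k x))).
  assert (U : forall eps, 0 < eps -> exists N, forall n x, (N <= n)%nat ->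
     Rabs (lr x - SR c n x) <= eps /\ Rabs (li x - SI c n x) <= eps).
  { intros e He. destruct (LR e He) as [N1 H1]. destruct (LI e He) as [N2 H2].
    exists (Nat.max N1 N2). intros n x Hn. split; [apply H1 | apply H2]; lia. }
  exists (fun x => Cplus (c 0%Z) (lr x, li x)).
  assert (Efst : forall x n, fst (Cplus (c 0%Z) (lr x, li x)) - fst (Spart c n x) = lr x - SR c n x).
  { intros. rewrite Spart_comp. destruct (c 0%Z). simpl. ring. }
  assert (Esnd : forall x n, snd (Cplus (c 0%Z) (lr x, li x)) - snd (Spart c n x) = li x - SI c n x).
  { intros. rewrite Spart_comp. destruct (c 0%Z). simpl. ring. }
  split; [|split; [|split]].
  - intros x. apply filterlim_locally. intros eps.
    destruct (U (eps / 4)) as [N HN]. destruct eps; simpl; lra.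
    destruct (SR_lip c N) as [L1 [HL1 HL1']]. destruct (SI_lip c N) as [L2 [HL2 HL2']].
    assert (Hd : 0 < eps / (4 * (L1 + L2 + 1))) by (destruct eps; simpl; apply Rdiv_lt_0_compat; lra).
    exists (mkposreal _ Hd). intros y Hy. apply ballR_inv in Hy. simpl in Hy.
    destruct (HN N x (le_n _)) as [Ax Bx]. destruct (HN N y (le_n _)) as [Ay By].
    pose proof (HL1' x y). pose proof (HL2' x y).
    assert (L1 * Rabs (y - x) <= eps / 4 /\ L2 * Rabs (y - x) <= eps / 4).
    { pose proof (Rabs_pos (y - x)). destruct eps as [e he]; simpl in *.
      assert (e / (4 * (L1 + L2 + 1)) * (L1 + L2 + 1) = e / 4) by (field; lra).
      split; nra. }
    apply ballC; simpl; destruct (c 0%Z) as [c1 c2]; simpl.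
    + replace (c1 + lr y - (c1 + lr x)) with ((lr y - SR c N y) + (SR c N y - SR c N x) - (lr x - SR c N x)) by ring.
      unfold Rminus at 1. eapply Rle_lt_trans. apply Rabs_triang. rewrite Rabs_Ropp.
      eapply Rle_lt_trans. apply Rplus_le_compat_r. apply Rabs_triang. destruct eps; simpl in *. lra.
    + replace (c2 + li y - (c2 + li x)) with ((li y - SI c N y) + (SI c N y - SI c N x) - (li x - SI c N x)) by ring.
      unfold Rminus at 1. eapply Rle_lt_trans. apply Rabs_triang. rewrite Rabs_Ropp.
      eapply Rle_lt_trans. apply Rplus_le_compat_r. apply Rabs_triang. destruct eps; simpl in *. lra.
  - intros x. unfold lr, li.
    rewrite (Lim_seq_ext (fun k => SR c k (x + 2 * PI)) (fun k => SR c k x)) by (intros; apply SR_period).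
    rewrite (Lim_seq_ext (fun k => SI c k (x + 2 * PI)) (fun k => SI c k x)) by (intros; apply SI_period).
    reflexivity.
  - intros x. apply filterlim_locally. intros eps.
    destruct (U (eps / 2)) as [N HN]. destruct eps; simpl; lra.
    exists N. intros n Hn. destruct (HN n x Hn) as [A1 A2].
    apply ballC.
    + rewrite <- Rabs_Ropp. rewrite Ropp_minus_distr, Efst. destruct eps; simpl in *; lra.
    + rewrite <- Rabs_Ropp. rewrite Ropp_minus_distr, Esnd. destruct eps; simpl in *; lra.
  - intros eps He. destruct (U (eps / 2)) as [N HN]. lra.
    exists N. intros n Hn x. destruct (HN n x Hn) as [A1 A2].
    eapply Rle_trans. apply Cmod_le_sum.
    change (fst (Cminus ?a ?b)) with (fst a - fst b).
    change (snd (Cminus ?a ?b)) with (snd a - snd b).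
    rewrite Efst, Esnd. lra.
Qed.

Lemma sum_lower (g : nat -> R) m1 m2 n : (forall k, 0 <= g k) -> (m1 <= m2)%nat ->
  sum_n_m g m2 n <= sum_n_m g m1 n.
Proof.
  intros Hg H. destruct (Nat.eq_dec m2 0). { replace m1 with 0%nat by lia. subst; lra. }
  destruct (le_lt_dec m2 (S n)).
  - rewrite (sum_split g m1 (m2 - 1) n) by lia. replace (S (m2 - 1)) with m2 by lia.
    assert (0 <= sum_n_m g m1 (m2 - 1)) by (apply sum_nonneg; auto). lra.
  - rewrite (sum_n_m_zero g m2 n) by lia. change (@zero R_AbelianMonoid) with 0.
    apply sum_nonneg; auto.
Qed.

Lemma even_sum (g : nat -> R) : (forall k, 0 <= g k) -> forall d q,
  sum_n_m (fun j => g (2 * j)%nat) q (q + d) <= sum_n_m g (2 * q) (2 * q + 2 * d).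
Proof.
  intros Hg. induction d; intros q.
  - rewrite !Nat.add_0_r. rewrite !sum_n_n. lra.
  - replace (q + S d)%nat with (S (q + d)) by lia.
    replace (2 * q + 2 * S d)%nat with (S (S (2 * q + 2 * d))) by lia.
    rewrite !sumR_Sm by lia. pose proof (IHd q). pose proof (Hg (S (2 * q + 2 * d))).
    replace (2 * S (q + d))%nat with (S (S (2 * q + 2 * d))) by lia. lra.
Qed.

Section Dir1.
Variable c : Z -> C.

Lemma tele m' : (1 <= m')%nat -> forall d,
  Cmod (cp c (m' + d)) <= Cmod (cp c m') +
    sum_n_m (fun k => Cmod (Delta (fun n : nat => c (Z.of_nat n)) k)) m' (m' + d - 1).
Proof.
  intros Hm. induction d.
  - rewrite Nat.add_0_r. rewrite sum_n_m_zero by lia. change (@zero R_AbelianMonoid) with 0. lra.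
  - replace (m' + S d - 1)%nat with (m' + d)%nat by lia.
    destruct d.
    + rewrite Nat.add_0_r, sum_n_n. replace (m' + 1)%nat with (S m') by lia.
      unfold cp, Delta.
      pose proof (Cmod_triangle (c (Z.of_nat m')) (Copp (Cminus (c (Z.of_nat m')) (c (Z.of_nat (S m')))))).
      replace (Cplus (c (Z.of_nat m')) (Copp (Cminus (c (Z.of_nat m')) (c (Z.of_nat (S m')))))) with (c (Z.of_nat (S m'))) in H.
      2:{ destruct (c (Z.of_nat m')), (c (Z.of_nat (S m'))). unfold Cplus, Copp, Cminus; simpl. f_equal; ring. }
      rewrite Cmod_opp in H. lra.
    + set (F := fun k => Cmod (Delta (fun n : nat => c (Z.of_nat n)) k)) in *.
      assert (Es : sum_n_m F m' (m' + S d) = sum_n_m F m' (m' + S d - 1) + F (m' + S d)%nat).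
      { pose proof (sumR_Sm F m' (m' + S d - 1) ltac:(lia)) as Q.
        replace (S (m' + S d - 1)) with (m' + S d)%nat in Q by lia. exact Q. }
      rewrite Es. unfold F at 2.
      replace (m' + S (S d))%nat with (S (m' + S d)) by lia.
      unfold cp, Delta in *.
      pose proof (Cmod_triangle (c (Z.of_nat (m' + S d))) (Copp (Cminus (c (Z.of_nat (m' + S d))) (c (Z.of_nat (S (m' + S d))))))).
      replace (Cplus (c (Z.of_nat (m' + S d))) (Copp (Cminus (c (Z.of_nat (m' + S d))) (c (Z.of_nat (S (m' + S d))))))) with (c (Z.of_nat (S (m' + S d)))) in H.
      2:{ destruct (c (Z.of_nat (m' + S d))), (c (Z.of_nat (S (m' + S d)))). unfold Cplus, Copp, Cminus; simpl. f_equal; ring. }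
      rewrite Cmod_opp in H. lra.
Qed.

Lemma snd_split m n x : @eq R (sum_n_m (fun k => snd (uu c k x)) m n)
  (sum_n_m (fun k => snd (bb c k) * cos (INR k * x) - fst (bb c k) * sin (INR k * x)) m n
   + 2 * sum_n_m (fun k => fst (cp c k) * sin (INR k * x)) m n).
Proof.
  rewrite (sum_n_m_ext _ (fun k => (snd (bb c k) * cos (INR k * x) - fst (bb c k) * sin (INR k * x)) + 2 * (fst (cp c k) * sin (INR k * x)))).
  2:{ intros k. apply eqRs. rewrite uu_snd. ring. }
  rewrite sumR_plus, sumR_mult. reflexivity.
Qed.

Lemma ucauchy_rev (f : R -> C) :
  (forall eps : R, 0 < eps -> exists N : nat, forall n : nat, (N <= n)%nat ->
            forall x : R, Cmod (Cminus (f x) (Spart c n x)) <= eps) ->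
  forall eps, 0 < eps -> exists N, forall p n x, (N <= p)%nat -> (N <= n)%nat ->
    Rabs (SR c n x - SR c p x) <= eps /\ Rabs (SI c n x - SI c p x) <= eps.
Proof.
  intros H eps He. destruct (H (eps / 2) ltac:(lra)) as [N HN]. exists N.
  intros p n x Hp Hn. pose proof (HN p Hp x) as A. pose proof (HN n Hn x) as B.
  rewrite !Spart_comp in A, B.
  pose proof (re_le (Cminus (f x) (Cplus (c 0%Z) (SR c p x, SI c p x)))).
  pose proof (im_le (Cminus (f x) (Cplus (c 0%Z) (SR c p x, SI c p x)))).
  pose proof (re_le (Cminus (f x) (Cplus (c 0%Z) (SR c n x, SI c n x)))).
  pose proof (im_le (Cminus (f x) (Cplus (c 0%Z) (SR c n x, SI c n x)))).
  destruct (f x) as [f1 f2]. destruct (c 0%Z) as [c1 c2]. simpl in *.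
  apply Rabs_bw in H0. apply Rabs_bw in H1. apply Rabs_bw in H2. apply Rabs_bw in H3.
  split; apply Rabs_le; lra.
Qed.

Lemma fst_uu0 k : fst (uu c k 0) = fst (bb c k).
Proof. rewrite uu_fst, Rmult_0_r, cos_0, sin_0. ring. Qed.

Lemma bseries th : 0 <= th < PI / 2 ->
  (forall n : nat, (1 <= n)%nat -> inM th (bb c n)) ->
  (forall eps, 0 < eps -> exists N, forall p n x, (N <= p)%nat -> (N <= n)%nat ->
    Rabs (SR c n x - SR c p x) <= eps /\ Rabs (SI c n x - SI c p x) <= eps) ->
  ex_series (fun n => Cmod (bb c (S n))).
Proof.
  intros Hth Hb UC. apply (ex_series_Cauchy (K := R_AbsRing) (V := R_CompleteNormedModule)).
  assert (Hc : 0 < cos th) by (apply cos_gt_0; lra).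
  intros [eps He].
  destruct (UC (eps * cos th / 2)) as [N HN]. { apply Rdiv_lt_0_compat; [nra | lra]. }
  exists N. intros n m Hn Hm.
  change (Rabs (sum_n_m (fun j => Cmod (bb c (S j))) n m) < eps). simpl.
  destruct (le_lt_dec n m) as [nm|mn].
  2:{ rewrite sum_n_m_zero by lia. change (@zero R_AbelianMonoid) with 0. rewrite Rabs_R0. lra. }
  rewrite (sum_n_m_S (G := R_AbelianMonoid) (fun k => Cmod (bb c k))).
  assert (Hnn : 0 <= sum_n_m (fun k => Cmod (bb c k)) (S n) (S m)) by (apply sum_nonneg; intros; apply Cmod_ge_0).
  rewrite Rabs_right by lra.
  destruct (HN n (S m) 0 Hn ltac:(lia)) as [A _].
  rewrite SR_diff in A by lia.
  rewrite (sum_n_m_ext _ (fun k => fst (bb c k))) in A by (intros; apply fst_uu0).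
  assert (cos th * sum_n_m (fun k => Cmod (bb c k)) (S n) (S m) <= sum_n_m (fun k => fst (bb c k)) (S n) (S m)).
  { rewrite <- sumR_mult. apply sum_le_loc. intros k Hk. apply cone; auto. apply Hb; lia. }
  pose proof (Rle_abs (sum_n_m (fun k => fst (bb c k)) (S n) (S m))).
  assert (cos th * sum_n_m (fun k => Cmod (bb c k)) (S n) (S m) < cos th * eps) by nra.
  apply Rmult_lt_reg_l in H1; auto.
Qed.

Lemma sin_lower (m k : nat) : (1 <= m)%nat -> (m <= k <= 2 * m)%nat ->
  / sqrt 2 <= sin (INR k * (PI / (4 * INR m))).
Proof.
  intros Hm Hk. assert (Hm' : 0 < INR m) by (apply lt_0_INR; lia).
  assert (H1 : INR m <= INR k) by (apply le_INR; lia).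
  assert (H2 : INR k <= 2 * INR m).
  { assert (Q : INR k <= INR (2 * m)) by (apply le_INR; lia). rewrite mult_INR in Q. change (INR 2) with 2 in Q. exact Q. }
  assert (Hs2 : 0 < sqrt 2) by (apply sqrt_lt_R0; lra).
  replace (/ sqrt 2) with (1 / sqrt 2) by (field; lra).
  rewrite <- sin_PI4. pose proof PI_RGT_0.
  set (r := INR k / INR m).
  assert (Er : INR k * (PI / (4 * INR m)) = r * (PI / 4)) by (unfold r; field; lra).
  assert (1 <= r <= 2).
  { unfold r. split.
    - apply Rmult_le_reg_r with (INR m); auto. field_simplify; lra.
    - apply Rmult_le_reg_r with (INR m); auto. field_simplify; lra. }
  rewrite Er. apply sin_incr_1; nra.
Qed.

Lemma Tsmall th : 0 <= th < PI / 2 ->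
  (forall n : nat, (1 <= n)%nat -> inM th (cp c n)) ->
  ex_series (fun n => Cmod (bb c (S n))) ->
  (forall eps, 0 < eps -> exists N, forall p n x, (N <= p)%nat -> (N <= n)%nat ->
    Rabs (SR c n x - SR c p x) <= eps /\ Rabs (SI c n x - SI c p x) <= eps) ->
  forall eta, 0 < eta -> exists M, forall m, (M <= m)%nat -> (1 <= m)%nat ->
    sum_n_m (fun k => Cmod (cp c k)) m (2 * m) <= eta.
Proof.
  intros Hth Hcp Hser UC eta Heta.
  assert (Hc : 0 < cos th) by (apply cos_gt_0; lra).
  assert (Hs2 : 0 < sqrt 2) by (apply sqrt_lt_R0; lra).
  set (g := cos th / sqrt 2).
  assert (Hg : 0 < g) by (unfold g; apply Rdiv_lt_0_compat; lra).
  destruct (UC (g * eta / 2)) as [N HN]. { apply Rdiv_lt_0_compat; nra. }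
  destruct (tail_b c Hser (g * eta / 4)) as [N2 HN2]. { apply Rdiv_lt_0_compat; nra. }
  exists (S (Nat.max N N2)). intros m Hm Hm1.
  set (x := PI / (4 * INR m)).
  destruct (HN (m - 1)%nat (2 * m)%nat x ltac:(lia) ltac:(lia)) as [_ A].
  rewrite SI_diff in A by lia. replace (S (m - 1)) with m in A by lia.
  rewrite snd_split in A.
  pose proof (HN2 (m - 1)%nat (2 * m)%nat ltac:(lia) ltac:(lia)) as Bt.
  replace (S (m - 1)) with m in Bt by lia.
  assert (B1 : Rabs (sum_n_m (fun k => snd (bb c k) * cos (INR k * x) - fst (bb c k) * sin (INR k * x)) m (2 * m))
     <= 2 * sum_n_m (fun k => Cmod (bb c k)) m (2 * m)).
  { eapply Rle_trans. apply sum_abs. rewrite <- sumR_mult. apply sum_le_loc. intros; apply bterm2. }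
  assert (B2 : g * sum_n_m (fun k => Cmod (cp c k)) m (2 * m) <= sum_n_m (fun k => fst (cp c k) * sin (INR k * x)) m (2 * m)).
  { rewrite <- sumR_mult. apply sum_le_loc. intros k Hk.
    pose proof (cone th (cp c k) Hth (Hcp k ltac:(lia))).
    pose proof (sin_lower m k Hm1 Hk). fold x in H0.
    pose proof (Cmod_ge_0 (cp c k)).
    assert (0 < / sqrt 2) by (apply Rinv_0_lt_compat; lra).
    replace (g * Cmod (cp c k)) with ((cos th * Cmod (cp c k)) * / sqrt 2) by (unfold g; field; lra).
    apply Rmult_le_compat; nra. }
  apply Rabs_bw in A. apply Rabs_bw in B1.
  assert (g * sum_n_m (fun k => Cmod (cp c k)) m (2 * m) <= g * eta) by lra.
  apply Rmult_le_reg_l in H; auto.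
Qed.

Lemma parity n : exists p, n = (2 * p)%nat \/ n = (2 * p + 1)%nat.
Proof.
  induction n. exists 0%nat; lia.
  destruct IHn as [p [->| ->]]. exists p; lia. exists (S p); lia.
Qed.

Lemma nlim K : 0 <= K ->
  (forall m : nat, (1 <= m)%nat ->
       sum_n_m (fun n => Cmod (Delta (fun n : nat => c (Z.of_nat n)) n)) m (2 * m) <= K * (Cmod (c (Z.of_nat m)) + Cmod (c (Z.of_nat (2 * m)%nat)))) ->
  (forall eta, 0 < eta -> exists M, forall m, (M <= m)%nat -> (1 <= m)%nat ->
    sum_n_m (fun k => Cmod (cp c k)) m (2 * m) <= eta) ->
  is_lim_seq (fun n : nat => Cmod (Cmult (RtoC (INR n)) (c (Z.of_nat n)))) 0.
Proof.
  intros HK Hblk HT. apply is_lim_seq_spec. intros [eps He]. simpl.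
  set (eta := eps / (12 * (K + 1))).
  assert (Heta : 0 < eta) by (unfold eta; apply Rdiv_lt_0_compat; lra).
  destruct (HT eta Heta) as [M HM].
  exists (2 * M + 2)%nat. intros n Hn.
  rewrite Rminus_0_r, Cmod_INR_mult.
  rewrite Rabs_right by (apply Rle_ge, Rmult_le_pos; [apply pos_INR | apply Cmod_ge_0]).
  destruct (parity n) as [p Hp].
  assert (Hp1 : (M + 1 <= p)%nat) by lia.
  set (g := fun k => Cmod (cp c k)).
  assert (Hg : forall k, 0 <= g k) by (intros; apply Cmod_ge_0).
  assert (Key : forall j, (p + 1 <= j <= 2 * p)%nat -> g n <= (K + 1) * (g j + g (2 * j)%nat)).
  { intros j Hj. pose proof (tele j ltac:(lia) (n - j)) as T.
    replace (j + (n - j))%nat with n in T by lia.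
    assert (sum_n_m (fun k => Cmod (Delta (fun n : nat => c (Z.of_nat n)) k)) j (n - 1)
            <= sum_n_m (fun k => Cmod (Delta (fun n : nat => c (Z.of_nat n)) k)) j (2 * j)).
    { apply sum_range_mono. intros; apply Cmod_ge_0. lia. lia. }
    replace (j + (n - j) - 1)%nat with (n - 1)%nat in T by lia.
    pose proof (Hblk j ltac:(lia)). unfold g, cp in *. pose proof (Cmod_ge_0 (c (Z.of_nat (2 * j)))).
    pose proof (Cmod_ge_0 (c (Z.of_nat j))). nra. }
  assert (S1 : INR p * g n <= (K + 1) * (sum_n_m g (p + 1) (2 * p) + sum_n_m (fun j => g (2 * j)%nat) (p + 1) (2 * p))).
  { rewrite <- sumR_plus, <- sumR_mult.
    replace (INR p * g n) with (sum_n_m (fun _ => g n) (p + 1) (2 * p)).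
    apply sum_le_loc. exact Key.
    rewrite sum_n_m_const. f_equal. f_equal. lia. }
  assert (S2 : sum_n_m g (p + 1) (2 * p) <= eta).
  { eapply Rle_trans. apply sum_lower with (m1 := p); auto; lia. apply HM; lia. }
  assert (S3 : sum_n_m (fun j => g (2 * j)%nat) (p + 1) (2 * p) <= eta).
  { pose proof (even_sum g Hg (p - 1) (p + 1)) as E.
    replace (p + 1 + (p - 1))%nat with (2 * p)%nat in E by lia.
    replace (2 * (p + 1) + 2 * (p - 1))%nat with (2 * (2 * p))%nat in E by lia.
    eapply Rle_trans. exact E. eapply Rle_trans. apply sum_lower with (m1 := (2 * p)%nat); auto; lia.
    apply HM; lia. }
  assert (Hn3 : INR n <= 3 * INR p).
  { assert (INR n <= INR (3 * p)) by (apply le_INR; lia). rewrite mult_INR in H. replace (INR 3) with 3 in H by (simpl; ring). lra. }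
  assert (INR p * g n <= (K + 1) * (2 * eta)) by nra.
  assert ((K + 1) * (2 * eta) = eps / 6) by (unfold eta; field; lra).
  assert (INR n * g n <= 3 * INR p * g n) by (apply Rmult_le_compat_r; [apply Hg | lra]).
  change (INR n * g n < eps). lra.
Qed.
End Dir1.

Theorem theorem2 (c : Z -> C)
  (hM : exists theta0 : R, 0 <= theta0 < PI / 2 /\
          forall n : nat, (1 <= n)%nat ->
            inM theta0 (Cplus (c (Z.of_nat n)) (c (- Z.of_nat n)%Z)))
  (hN : NBVS (fun n : nat => c (Z.of_nat n))) :
  (exists f : R -> C,
      (forall x : R, continuous f x)
      /\ (forall x : R, f (x + 2 * PI) = f x)
      /\ (forall x : R, filterlim (fun n : nat => Spart c n x) eventually (locally (f x)))
      /\ (forall eps : R, 0 < eps -> exists N : nat, forall n : nat, (N <= n)%nat ->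
            forall x : R, Cmod (Cminus (f x) (Spart c n x)) <= eps))
  <->
  (is_lim_seq (fun n : nat => Cmod (Cmult (RtoC (INR n)) (c (Z.of_nat n)))) 0
   /\ ex_series (fun n : nat =>
        Cmod (Cplus (c (Z.of_nat (S n))) (c (- Z.of_nat (S n))%Z)))).
Proof.
  destruct hN as [[th' [Hth' Hcp]] [K [HK Hblk]]].
  split.
  - intros [f [_ [_ [_ Hu]]]].
    pose proof (ucauchy_rev c f Hu) as UC.
    destruct hM as [th [Hth Hb]].
    assert (Hser : ex_series (fun n => Cmod (bb c (S n)))) by exact (bseries c th Hth Hb UC).
    split.
    + apply (nlim c K); [lra | exact Hblk | exact (Tsmall c th' Hth' Hcp Hser UC)].
    + exact Hser.
  - intros [Hlim Hser]. apply (dir2 c K); auto; lra.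
Qed.
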